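(* Let $\alpha\in(0,\infty)$, $\zeta_1=1$, $\zeta_2=\zeta_3=\mathrm{sech}(2\alpha)$, $\nu=\tanh(2\alpha)$ (the $k=1$ case of the parameterization $\zeta_2=\zeta_1\mathrm{dn}(2\alpha,k)$, $\zeta_3=\zeta_1\mathrm{cn}(2\alpha,k)$, in which the periodic profile degenerates to the hyperbolic profile $\phi(x)=\frac{e^{2z}+e^{-2z}+2[1-\sinh^2(2\alpha)]\mathrm{sech}(2\alpha)}{e^{2z}+e^{-2z}+2\cosh(2\alpha)}$, $z=\tanh(2\alpha)x$). Then the kink breather described in the context, taken for $k=1$, is equivalent up to the translational parameters in $\xi$ and $\eta$ to the two-soliton solution $$u(x,t)=\frac{\sinh(\eta+2\alpha)e^{-2z}+\sinh(\eta-2\alpha)e^{2z}+2\sinh(\eta)(1-\sinh^2(2\alpha))\mathrm{sech}(2\alpha)}{\cosh(\eta+2\alpha)e^{-2z}+\cosh(\eta-2\alpha)e^{2z}+2\cosh(\eta)\cosh(2\alpha)},$$ where $\xi=x+2t+4\,\mathrm{sech}^2(2\alpha)\,t$, $\eta=x+2t$, and $z=\tanh(2\alpha)\xi$.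
   Context: The kink breather: for $0<\zeta_3<\zeta_2<\zeta_1$, $b=4\zeta_1\zeta_2\zeta_3$, $c=2(\zeta_1^2+\zeta_2^2+\zeta_3^2)$, $\nu=\sqrt{\zeta_1^2-\zeta_3^2}$, modulus $k=\sqrt{(\zeta_1^2-\zeta_2^2)/(\zeta_1^2-\zeta_3^2)}$, $\alpha$ with $\mathrm{sn}(\alpha)=\sqrt{(\zeta_1-\zeta_3)/(\zeta_1+\zeta_2)}$, profile $\phi(x)=\frac{2(\zeta_1+\zeta_3)(\zeta_2+\zeta_3)}{(\zeta_1+\zeta_3)-(\zeta_1-\zeta_2)\mathrm{sn}^2(\nu x)}-\zeta_1-\zeta_2-\zeta_3$, $s_0=\zeta_2+\zeta_3-\zeta_1+2\nu Z(\alpha)$, $c_b=c-b/s_0$, $\xi=x+ct$, $\eta=s_0(x+c_bt)$, it is the solution of $u_t-6u^2u_x+u_{xxx}=0$ $$u=\frac{4\phi(\xi)\Theta^2(\nu\xi+\alpha)+e^{2(\eta+\eta_0)}\Theta^2(\nu\xi-\alpha)(2\phi\phi'-\phi''-b)(\xi)}{4\Theta^2(\nu\xi+\alpha)+e^{2(\eta+\eta_0)}\Theta^2(\nu\xi-\alpha)(c+2\phi'-2\phi^2)(\xi)},\quad \eta_0\in\mathbb{R}.$$ Here $K=K(k)$, $K'=K(\sqrt{1-k^2})$, $q=e^{-\pi K'/K}$, $\Theta(x)=\theta_4(\pi x/(2K))$ with $\theta_4(y)=1+2\sum_{n\ge1}(-1)^nq^{n^2}\cos(2ny)$, and $Z=\Theta'/\Theta$.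 The ''$k=1$'' case refers to the degeneration of these elliptic expressions to hyperbolic ones as $k\to1$ (with $\zeta_1=1$, $\alpha$ fixed). *)

(* Defs.v *)
From Stdlib Require Import Reals.
From Coquelicot Require Import Coquelicot.
Open Scope R_scope.

Definition sech (x : R) : R := / cosh x.

(** * The kink breather of the context, degenerated to k = 1.
    In the limit k -> 1 the elliptic objects degenerate as
      sn(y,k) -> tanh y,   Z(y) -> tanh y,   Theta(y) -> Theta(0) * cosh y;
    the constant factor Theta(0)^2 cancels between numerator and
    denominator of the kink-breather formula (which is homogeneous of
    degree 2 in Theta), so we may take Theta := cosh. *)

Section KB.
Variables (z1 z2 z3 nu al : R).

Definition kb_b : R := 4 * z1 * z2 * z3.
Definition kb_c : R := 2 * (z1 ^ 2 + z2 ^ 2 + z3 ^ 2).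

Definition kb_phi (x : R) : R :=
  2 * (z1 + z3) * (z2 + z3) / ((z1 + z3) - (z1 - z2) * (tanh (nu * x)) ^ 2)
  - z1 - z2 - z3.

Definition kb_s0 : R := z2 + z3 - z1 + 2 * nu * tanh al.
Definition kb_cb : R := kb_c - kb_b / kb_s0.

Definition kb_Theta (y : R) : R := cosh y.

Definition kb_formula (eta0 xi eta : R) : R :=
  let p   := kb_phi xi in
  let p1  := Derive kb_phi xi in
  let p2  := Derive (Derive kb_phi) xi in
  let Tp  := (kb_Theta (nu * xi + al)) ^ 2 in
  let Tm  := (kb_Theta (nu * xi - al)) ^ 2 in
  let E   := exp (2 * (eta + eta0)) in
  (4 * p * Tp + E * Tm * (2 * p * p1 - p2 - kb_b))
  / (4 * Tp + E * Tm * (kb_c + 2 * p1 - 2 * p ^ 2)).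

Definition kb_xi (x t : R) : R := x + kb_c * t.
Definition kb_eta (x t : R) : R := kb_s0 * (x + kb_cb * t).

End KB.

Definition c2_z1 (al : R) : R := 1.
Definition c2_z2 (al : R) : R := sech (2 * al).
Definition c2_z3 (al : R) : R := sech (2 * al).
Definition c2_nu (al : R) : R := tanh (2 * al).

Definition kink_breather_k1 (al eta0 xi0 x t : R) : R :=
  let z1 := c2_z1 al in let z2 := c2_z2 al in let z3 := c2_z3 al in
  let nu := c2_nu al in
  kb_formula z1 z2 z3 nu al eta0
    (kb_xi z1 z2 z3 x t + xi0) (kb_eta z1 z2 z3 nu al x t).

Definition two_soliton_formula (al xi eta : R) : R :=
  let z := tanh (2 * al) * xi in
  (sinh (eta + 2 * al) * exp (- 2 * z) + sinh (eta - 2 * al) * exp (2 * z)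
     + 2 * sinh eta * (1 - (sinh (2 * al)) ^ 2) * sech (2 * al))
  / (cosh (eta + 2 * al) * exp (- 2 * z) + cosh (eta - 2 * al) * exp (2 * z)
     + 2 * cosh eta * cosh (2 * al)).

Definition ts_xi (al x t : R) : R := x + 2 * t + 4 * (sech (2 * al)) ^ 2 * t.
Definition ts_eta (x t : R) : R := x + 2 * t.

(* Main.v *)
Require Import Defs.
From Stdlib Require Import Reals Lra Field FunctionalExtensionality.
From Coquelicot Require Import Coquelicot.
Open Scope R_scope.

Definition gD (C T x : R) := (exp (2*T*x) + exp (-(2*T*x)))/2 + C.
Definition gk (C : R) := 2*(C^2-1)/C.
Definition g (C T x : R) := 1 - gk C / gD C T x.
Definition g1 (C T x : R) := gk C * (2*T*((exp (2*T*x) - exp (-(2*T*x)))/2)) / (gD C T x)^2.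
Definition g2 (C T x : R) := gk C * ((4*T^2*((exp (2*T*x) + exp (-(2*T*x)))/2)) * gD C T x
   - 2*(2*T*((exp (2*T*x) - exp (-(2*T*x)))/2))^2) / (gD C T x)^3.

Lemma gD_pos C T x : 0 < C -> 0 < gD C T x.
Proof. intros; unfold gD; generalize (exp_pos (2*T*x)) (exp_pos (-(2*T*x))); lra. Qed.

Lemma g_der C T x : 0 < C -> is_derive (g C T) x (g1 C T x).
Proof.
  intros hC. pose proof (gD_pos C T x hC) as hD.
  unfold g, g1, gk. unfold gD in *.
  auto_derive. lra.
  field. lra.
Qed.
Lemma g1_der C T x : 0 < C -> is_derive (g1 C T) x (g2 C T x).
Proof.
  intros hC. pose proof (gD_pos C T x hC) as hD.
  unfold g2, g1, gk. unfold gD in *.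
  auto_derive. { apply Rgt_not_eq; unfold Rdiv in hD. nra. }
  field. lra.
Qed.

Lemma phi_eq al : kb_phi (c2_z1 al) (c2_z2 al) (c2_z3 al) (c2_nu al)
  = g (cosh (2*al)) (tanh (2*al)).
Proof.
  apply functional_extensionality; intro x.
  assert (hC : 0 < cosh (2*al)). { unfold cosh. generalize (exp_pos (2*al)) (exp_pos (-(2*al))). lra. }
  unfold kb_phi, c2_z1, c2_z2, c2_z3, c2_nu, g, gD, gk, sech.
  set (C := cosh (2*al)) in *. set (T := tanh (2*al)).
  unfold tanh, sinh, cosh.
  rewrite exp_Ropp.
  replace (2*T*x) with (T*x + T*x) by ring.
  rewrite Ropp_plus_distr, !exp_plus, !exp_Ropp.
  set (E := exp (T*x)).
  assert (hE : 0 < E) by apply exp_pos.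
  assert (hE2 : 0 < E*E) by nra.
  field. repeat split; try lra; try nra.
Qed.

Lemma cosh_pos' y : 0 < cosh y.
Proof. unfold cosh. generalize (exp_pos y) (exp_pos (-y)). lra. Qed.

Lemma Dphi al x : Derive (kb_phi (c2_z1 al) (c2_z2 al) (c2_z3 al) (c2_nu al)) x
  = g1 (cosh (2*al)) (tanh (2*al)) x.
Proof. rewrite phi_eq. apply is_derive_unique, g_der, cosh_pos'. Qed.

Lemma DDphi al x : Derive (Derive (kb_phi (c2_z1 al) (c2_z2 al) (c2_z3 al) (c2_nu al))) x
  = g2 (cosh (2*al)) (tanh (2*al)) x.
Proof.
  replace (Derive (kb_phi (c2_z1 al) (c2_z2 al) (c2_z3 al) (c2_nu al)))
   with (g1 (cosh (2*al)) (tanh (2*al))).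
  - apply is_derive_unique, g1_der, cosh_pos'.
  - apply functional_extensionality; intro y. now rewrite Dphi.
Qed.

Lemma s0_eq al : kb_s0 (c2_z1 al) (c2_z2 al) (c2_z3 al) (c2_nu al) al = 1.
Proof.
  unfold kb_s0, c2_z1, c2_z2, c2_z3, c2_nu, sech, tanh, sinh, cosh.
  replace (2*al) with (al+al) by ring.
  rewrite Ropp_plus_distr, !exp_plus, !exp_Ropp.
  set (A := exp al). assert (0 < A) by apply exp_pos.
  assert (0 < A*A) by nra.
  field. repeat split; nra.
Qed.

Lemma xi_eq al x t : kb_xi (c2_z1 al) (c2_z2 al) (c2_z3 al) x t = ts_xi al x t.
Proof. unfold kb_xi, kb_c, ts_xi, c2_z1, c2_z2, c2_z3. ring. Qed.

Lemma eta_eq al x t : kb_eta (c2_z1 al) (c2_z2 al) (c2_z3 al) (c2_nu al) al x t = ts_eta x t.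
Proof.
  unfold kb_eta, kb_cb. rewrite s0_eq.
  unfold kb_c, kb_b, ts_eta, c2_z1, c2_z2, c2_z3. field.
Qed.
Definition CC a := (a + /a)/2.
Definition SS a := (a - /a)/2.
Definition kbnum (a x y : R) :=
  let C := CC a in let S := SS a in let T := S/C in let k := 2*S^2/C in
  let s := /C in let b := 4*1*s*s in let c := 2*(1^2+s^2+s^2) in
  let u := (x + /x)/2 in let v := (x - /x)/2 in let D := u + C in
  let p := 1 - k/D in let p1 := k*(2*T*v)/D^2 in
  let p2 := k*((4*T^2*u)*D - 2*(2*T*v)^2)/D^3 in
  let P := (x*a + 2 + /(x*a))/4 in let M := (x/a + 2 + a/x)/4 in
  (4*p*P + y*M*(2*p*p1 - p2 - b)).
Definition kbden (a x y : R) :=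
  let C := CC a in let S := SS a in let T := S/C in let k := 2*S^2/C in
  let s := /C in let b := 4*1*s*s in let c := 2*(1^2+s^2+s^2) in
  let u := (x + /x)/2 in let v := (x - /x)/2 in let D := u + C in
  let p := 1 - k/D in let p1 := k*(2*T*v)/D^2 in
  let P := (x*a + 2 + /(x*a))/4 in let M := (x/a + 2 + a/x)/4 in
  (4*P + y*M*(c + 2*p1 - 2*p^2)).
Definition tsnum (a x w : R) :=
  (w*a - /a)/2*(a/x) + (w/a - a)/2*(x/a) + 2*((w - 1)/2)*(1-(SS a)^2)*/(CC a).
Definition tsden (a x w : R) :=
  (w*a + /a)/2*(a/x) + (w/a + a)/2*(x/a) + 2*((w + 1)/2)*(CC a).
Lemma core a x w : a > 0 -> x > 0 -> w > 0 ->
  kbnum a x (w * CC a ^2) * tsden a x w = - tsnum a x w * kbden a x (w * CC a ^2).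
Proof.
  intros. assert (a<>0) by lra. assert (x<>0) by lra.
  assert (hC : a^2 + 1 <> 0) by nra.
  assert (0 < (x * x + 1) * a + (a * a + 1) * x) by (apply Rplus_lt_0_compat; apply Rmult_lt_0_compat; nra).
  unfold kbnum, kbden, tsnum, tsden, CC, SS. field.
  repeat split; lra.
Qed.
Lemma den a x w : a > 0 -> x > 0 -> w > 0 ->
  kbden a x (w * CC a ^2) * ((x + /x)/2 + CC a) = (x*a + 2 + /(x*a)) * tsden a x w.
Proof.
  intros. assert (a<>0) by lra. assert (x<>0) by lra.
  assert (0 < (x * x + 1) * a + (a * a + 1) * x) by (apply Rplus_lt_0_compat; apply Rmult_lt_0_compat; nra).
  unfold kbden, tsden, CC, SS. field.
  repeat split; nra.
Qed.

Lemma div_congr a b c d : a = c -> b = d -> a / b = c / d.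
Proof. intros; subst; reflexivity. Qed.

Ltac pos := repeat (assumption || apply Rplus_lt_0_compat || apply Rmult_lt_0_compat || apply Rinv_0_lt_compat); try assumption; try lra.

Ltac side := repeat split; try (apply Rgt_not_eq; pos).

Lemma div_scale a b c d W : W <> 0 -> d <> 0 -> a = c * W -> b = d * W -> a / b = c / d.
Proof. intros. subst. field. auto. Qed.

Lemma fin a x w : a > 0 -> x > 0 -> w > 0 ->
  kbnum a x (w*CC a^2) / kbden a x (w*CC a^2) = -1 * (tsnum a x w / tsden a x w).
Proof.
  intros ha hx hw.
  pose proof (core a x w ha hx hw) as Hc. pose proof (den a x w ha hx hw) as Hd.
  assert (0 < /a) by (apply Rinv_0_lt_compat; lra).
  assert (0 < /x) by (apply Rinv_0_lt_compat; lra).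
  assert (hCa : 0 < CC a) by (unfold CC; unfold Rdiv; pos).
  assert (ht : 0 < tsden a x w).
  { unfold tsden. unfold Rdiv. apply Rplus_lt_0_compat; [apply Rplus_lt_0_compat|]; pos.
    }
  assert (hk : kbden a x (w*CC a^2) <> 0).
  { intro h0. rewrite h0, Rmult_0_l in Hd. symmetry in Hd. apply Rmult_integral in Hd.
    destruct Hd as [Hd|Hd]; [|lra].
    assert (0 < x*a + 2 + /(x*a)). { assert (0 < /(x*a)) by (apply Rinv_0_lt_compat; nra). nra. }
    lra. }
  set (N := kbnum a x (w*CC a^2)) in *. set (K := kbden a x (w*CC a^2)) in *.
  set (tn := tsnum a x w) in *. set (td := tsden a x w) in *.
  assert (N = - tn * K / td). { rewrite <- Hc. field. lra. }
  rewrite H1. field. split; lra.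
Qed.

Lemma main al e0 xi eta : 0 < al ->
 kb_formula (c2_z1 al) (c2_z2 al) (c2_z3 al) (c2_nu al) al e0 xi eta
 = -1 * two_soliton_formula al (xi + -(al / tanh(2*al))) (eta + (e0 - ln (cosh (2*al)))).
Proof.
  intro hal.
  unfold kb_formula; cbv zeta. rewrite Dphi, DDphi, phi_eq.
  unfold two_soliton_formula; cbv zeta.
  unfold g, g1, g2, gD, gk, kb_Theta, kb_b, kb_c, c2_z1, c2_z2, c2_z3, c2_nu, sech.
  assert (hA1 : 1 < exp al). { rewrite <- exp_0. apply exp_increasing. lra. }
  assert (hC : cosh (2*al) = (exp al * exp al + / (exp al * exp al))/2).
  { unfold cosh. rewrite <- exp_plus, <- exp_Ropp. f_equal. f_equal; f_equal; ring. }
  assert (hS : sinh (2*al) = (exp al * exp al - / (exp al * exp al))/2).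
  { unfold sinh. rewrite <- exp_plus, <- exp_Ropp. f_equal. f_equal; f_equal; ring. }
  assert (hT : tanh (2*al) = sinh (2*al) / cosh (2*al)) by reflexivity.
  assert (hCp : 0 < cosh (2*al)) by apply cosh_pos'.
  assert (hSp : 0 < sinh (2*al)).
  { rewrite hS. assert (1 < exp al * exp al) by nra.
    assert (/ (exp al * exp al) < 1). { rewrite <- Rinv_1. apply Rinv_lt_contravar; nra. } lra. }
  assert (hTp : 0 < tanh (2*al)). { rewrite hT. unfold Rdiv. pos. }
  set (C := cosh (2*al)) in *. set (Sh := sinh (2*al)) in *. set (T := tanh (2*al)) in *.
  replace (-2 * (T * (xi + - (al / T)))) with (-(T*xi) + -(T*xi) + (al + al)) by (field; lra).
  replace (2 * (T * (xi + - (al / T)))) with (T*xi + T*xi + -(al + al)) by (field; lra).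
  replace (2*T*xi) with (T*xi + T*xi) by ring.
  replace (2*(eta+e0)) with ((eta+e0) + (eta+e0)) by ring.
  replace (eta + (e0 - ln C) + 2*al) with ((eta+e0) + - ln C + (al + al)) by ring.
  replace (eta + (e0 - ln C) - 2*al) with ((eta+e0) + - ln C + -(al + al)) by ring.
  replace (eta + (e0 - ln C)) with ((eta+e0) + - ln C) by ring.
  replace (T*xi - al) with (T*xi + - al) by ring.
  unfold cosh, sinh.
  rewrite ?Ropp_plus_distr, ?Ropp_involutive, ?exp_plus, ?exp_Ropp, ?exp_plus, ?exp_Ropp, exp_ln by lra.
  assert (hX : 0 < exp (T*xi)) by apply exp_pos.
  assert (hE1 : 0 < exp eta) by apply exp_pos.
  assert (hE2 : 0 < exp e0) by apply exp_pos.
  set (X := exp (T*xi)) in *. set (A := exp al) in *.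
  set (E1 := exp eta) in *. set (E2 := exp e0) in *.
  clearbody X A E1 E2. clearbody T Sh C. subst T Sh C.
  assert (hA : 0 < A) by lra.
  assert (ha : A*A > 0) by nra. assert (hx : X*X > 0) by nra.
  assert (hW : 0 < E1*E2 / ((A * A + / (A * A)) / 2)) by (unfold Rdiv; pos).
  assert (hw : (E1*E2 / ((A * A + / (A * A)) / 2))^2 > 0) by nra.
  pose proof (fin (A*A) (X*X) ((E1*E2 / ((A * A + / (A * A)) / 2))^2) ha hx hw) as HF.
  transitivity (kbnum (A*A) (X*X) ((E1*E2 / ((A * A + / (A * A)) / 2))^2 * CC (A*A)^2) /
                kbden (A*A) (X*X) ((E1*E2 / ((A * A + / (A * A)) / 2))^2 * CC (A*A)^2)).
  { apply div_congr.
    - unfold kbnum, CC, SS. field. side.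
    - unfold kbden, CC, SS. field. side. }
  rewrite HF. f_equal.
  apply (div_scale _ _ _ _ (E1 * E2 / ((A * A + / (A * A)) / 2))).
  - lra.
  - apply Rgt_not_eq. unfold Rdiv. pos.
  - unfold tsnum, CC, SS. field. side.
  - unfold tsden, CC, SS. field. side.
Qed.

Theorem corollary2 (al : R) (hal : 0 < al) :
  exists sg : R, (sg = 1 \/ sg = -1) /\
    (forall eta0 : R, exists xi1 eta1 : R, forall x t : R,
       kink_breather_k1 al eta0 0 x t
       = sg * two_soliton_formula al (ts_xi al x t + xi1) (ts_eta x t + eta1)) /\
    (forall xi1 eta1 : R, exists eta0 xi0 : R, forall x t : R,
       kink_breather_k1 al eta0 xi0 x t
       = sg * two_soliton_formula al (ts_xi al x t + xi1) (ts_eta x t + eta1)).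
Proof.
  exists (-1). split; [right; reflexivity|]. split.
  - intro e0. exists (-(al / tanh (2*al))), (e0 - ln (cosh (2*al))). intros x t.
    unfold kink_breather_k1; cbv zeta. rewrite main by exact hal.
    rewrite xi_eq, eta_eq, Rplus_0_r. reflexivity.
  - intros xi1 eta1. exists (eta1 + ln (cosh (2*al))), (xi1 + al / tanh (2*al)). intros x t.
    unfold kink_breather_k1; cbv zeta. rewrite main by exact hal.
    rewrite xi_eq, eta_eq. f_equal. f_equal; ring.
Qed.
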